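(* Let $(\mathbf f,\mathbf g)$ be a vector admissible system with potential $U$. For $(\mathbf x,\epsilon)\in\mathcal X\times\mathcal E$ let $\mathbf y=\mathbf f(\mathbf g(\mathbf x);\epsilon)$. If $\mathbf x\preceq\mathbf y$ or $\mathbf x\succeq\mathbf y$, then $U(\mathbf x;\epsilon)\ge U(\mathbf y;\epsilon)$.
   Context: Let $d\in\mathbb N$, $\mathcal X=[0,1]^d$, $\mathcal E=[0,1]$, $\mathcal X^\circ=\mathcal X\setminus\{\mathbf 0\}$. Vectors are row vectors; $\mathbf x\preceq\mathbf y$ means $x_i\le y_i$ for all $i$. For a vector-valued function $\mathbf h$ of $\mathbf x$, $\mathbf h'(\mathbf x)$ denotes its Jacobian matrix $[\partial h_i/\partial x_j]_{i,j}$; for a scalar function $F(\mathbf x;\epsilon)$, $F'(\mathbf x;\epsilon)$ denotes its gradient in $\mathbf x$ (a row vector). Let $\mathbf D$ be a $d\times d$ diagonal matrix with positive diagonal entries, $\mathbf f:\mathcal X\times\mathcal E\to\mathcal X$, $\mathbf g:\mathcal X\to\mathcal X$, and $F:\mathcal X\times\mathcal E\to\mathbb R$, $G:\mathcal X\to\mathbb R$ functionals with $F'(\mathbf x;\epsilon)=\mathbf f(\mathbf x;\epsilon)\mathbf D$ and $G'(\mathbf x)=\mathbf g(\mathbf x)\mathbf D$, normalized so that $F(\mathbf 0;\epsilon)=G(\mathbf 0)=0$. The pair $(\mathbf f,\mathbf g)$ is a vector admissible system if: (i) $\mathbf f,\mathbf g$ are twice continuously differentiable; (ii) $\mathbf f(\mathbf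 x;\epsilon)$ and $\mathbf g(\mathbf x)$ are non-decreasing in $\mathbf x$ with respect to $\preceq$; (iii) for each $\mathbf x\in\mathcal X^\circ$, $\mathbf f(\mathbf x;\epsilon)$ is strictly increasing in $\epsilon$, i.e. $\epsilon_1<\epsilon_2$ implies $\mathbf f(\mathbf x;\epsilon_1)\preceq\mathbf f(\mathbf x;\epsilon_2)$ and $\mathbf f(\mathbf x;\epsilon_1)\neq\mathbf f(\mathbf x;\epsilon_2)$; (iv) $\mathbf f(\mathbf 0;\epsilon)=\mathbf f(\mathbf x;0)=\mathbf g(\mathbf 0)=\mathbf 0$ and $F(\mathbf x;0)=0$. The associated recursion is $\mathbf x^{(\ell+1)}=\mathbf f(\mathbf g(\mathbf x^{(\ell)});\epsilon)$. The potential function is $U(\mathbf x;\epsilon)=\mathbf g(\mathbf x)\mathbf D\mathbf x^{\mathsf T}-G(\mathbf x)-F(\mathbf g(\mathbf x);\epsilon)$. *)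

(* Defs.v *)
From Stdlib Require Import Reals.
From mathcomp Require Import ssreflect ssrbool ssrfun eqtype ssrnat seq choice fintype.
Set Implicit Arguments. Unset Strict Implicit. Unset Printing Implicit Defensive.
Local Open Scope R_scope.

Definition vec (I : finType) := I -> R.

Definition sumI (I : finType) (h : I -> R) : R := foldr Rplus 0 (map h (enum I)).

Definition in_cube (I : finType) (x : vec I) : Prop := forall i, 0 <= x i <= 1.

Definition vle (I : finType) (x y : vec I) : Prop := forall i, x i <= y i.

Definition vzero (I : finType) : vec I := fun _ => 0.

Definition upd (I : finType) (x : vec I) (i : I) (v : R) : vec I :=
  fun j => if j == i then v else x j.

Definition has_partial (I : finType) (h : vec I -> R) (x : vec I) (i : I) (l : R) : Prop :=
  forall eps, 0 < eps -> exists delta, 0 < delta /\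
    forall t, t <> 0 -> Rabs t < delta -> in_cube (upd x i (x i + t)) ->
      Rabs ((h (upd x i (x i + t)) - h x) / t - l) < eps.

Definition cont_on_cube (I : finType) (h : vec I -> R) : Prop :=
  forall x, in_cube x -> forall eps, 0 < eps -> exists delta, 0 < delta /\
    forall y, in_cube y -> (forall j, Rabs (y j - x j) < delta) -> Rabs (h y - h x) < eps.

Definition C1_on_cube (I : finType) (h : vec I -> R) : Prop :=
  exists p : I -> vec I -> R,
    (forall i x, in_cube x -> has_partial h x i (p i x)) /\
    (forall i, cont_on_cube (p i)).

Definition C2_on_cube (I : finType) (h : vec I -> R) : Prop :=
  exists p : I -> vec I -> R,
    (forall i x, in_cube x -> has_partial h x i (p i x)) /\
    (forall i, C1_on_cube (p i)).

Definition in_E (e : R) : Prop := 0 <= e <= 1.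

(* Vector admissible system (f,g) with diagonal matrix D = diag(Dd) and functionals F, G
   satisfying F' = f D, G' = g D, F(0;e) = G(0) = 0. *)
Definition vector_admissible (d : nat) (Dd : 'I_d -> R)
    (f : vec 'I_d -> R -> vec 'I_d)
    (g : vec 'I_d -> vec 'I_d)
    (F : vec 'I_d -> R -> R) (G : vec 'I_d -> R) : Prop :=
  (forall i, 0 < Dd i) /\
  (forall x e, in_cube x -> in_E e -> in_cube (f x e)) /\
  (forall x, in_cube x -> in_cube (g x)) /\
  (forall x e, in_cube x -> in_E e -> forall i,
      has_partial (fun z => F z e) x i (f x e i * Dd i)) /\
  (forall x, in_cube x -> forall i, has_partial G x i (g x i * Dd i)) /\
  (forall e, in_E e -> F (@vzero 'I_d) e = 0) /\
  G (@vzero 'I_d) = 0 /\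
  (* (i) f (jointly in (x, e) on X x E) and g are twice continuously differentiable *)
  (forall k, C2_on_cube (fun z : vec (option 'I_d) =>
                           f (fun i => z (Some i)) (z None) k)) /\
  (forall k, C2_on_cube (fun x => g x k)) /\
  (forall x y e, in_cube x -> in_cube y -> in_E e -> vle x y -> vle (f x e) (f y e)) /\
  (forall x y, in_cube x -> in_cube y -> vle x y -> vle (g x) (g y)) /\
  (forall x e1 e2, in_cube x -> (exists i, x i <> 0) -> in_E e1 -> in_E e2 -> e1 < e2 ->
      vle (f x e1) (f x e2) /\ exists i, f x e1 i <> f x e2 i) /\
  (forall e, in_E e -> f (@vzero 'I_d) e = @vzero 'I_d) /\
  (forall x, in_cube x -> f x 0 = @vzero 'I_d) /\
  g (@vzero 'I_d) = @vzero 'I_d /\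
  (forall x, in_cube x -> F x 0 = 0).

Definition potential (d : nat) (Dd : 'I_d -> R)
    (g : vec 'I_d -> vec 'I_d)
    (F : vec 'I_d -> R -> R) (G : vec 'I_d -> R)
    (x : vec 'I_d) (e : R) : R :=
  sumI (fun i => g x i * Dd i * x i) - G x - F (g x) e.

(* Main.v *)
Require Import Defs.
From Stdlib Require Import Reals.
From mathcomp Require Import ssreflect ssrbool ssrfun eqtype ssrnat seq choice fintype.
Local Open Scope R_scope.
From Coquelicot Require Import Coquelicot.
From Stdlib Require Import Lra FunctionalExtensionality.
Definition clampR (p q t : R) := Rmax p (Rmin q t).

Lemma clamp_id p q t : p <= t <= q -> clampR p q t = t.
Proof. intros H; unfold clampR, Rmax, Rmin; repeat destruct Rle_dec; lra. Qed.

Lemma clamp_in p q t : p <= q -> p <= clampR p q t <= q.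
Proof. intros H; unfold clampR, Rmax, Rmin; repeat destruct Rle_dec; lra. Qed.

Lemma clamp_lip p q x y : p <= x <= q -> Rabs (clampR p q y - x) <= Rabs (y - x).
Proof.
intros H; unfold clampR, Rmax, Rmin; repeat destruct Rle_dec;
unfold Rabs; repeat destruct Rcase_abs; lra.
Qed.

Lemma mvt1 (phi dphi : R -> R) (p q : R) : p <= q ->
  (forall t, p <= t <= q -> forall eps, 0 < eps -> exists delta, 0 < delta /\
     forall h, h <> 0 -> Rabs h < delta -> p <= t + h <= q ->
       Rabs ((phi (t + h) - phi t) / h - dphi t) < eps) ->
  exists c, p <= c <= q /\ phi q - phi p = dphi c * (q - p).
Proof.
intros Hpq Hd.
destruct (Req_dec p q) as [E|Hne].
{ subst q. exists p. split. lra. ring. }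
assert (Hlt : p < q) by lra.
set (phic := fun t => phi (clampR p q t)).
destruct (MVT_gen phic p q dphi) as [c [Hc Heq]].
- rewrite -> Rmin_left by lra. rewrite -> Rmax_right by lra.
  intros x Hx. apply is_derive_Reals. intros eps Heps.
  destruct (Hd x ltac:(lra) eps Heps) as [del [Hdel H]].
  assert (Hpos : 0 < Rmin del (Rmin (x - p) (q - x))).
  { apply Rmin_pos; [lra| apply Rmin_pos; lra]. }
  exists (mkposreal _ Hpos). simpl. intros h Hh0 Hh.
  assert (Hh1 : Rabs h < del) by (eapply Rlt_le_trans; [exact Hh| apply Rmin_l]).
  assert (Hh2 : Rabs h < Rmin (x - p) (q - x)) by (eapply Rlt_le_trans; [exact Hh| apply Rmin_r]).
  assert (Hh3 : Rabs h < x - p) by (eapply Rlt_le_trans; [exact Hh2| apply Rmin_l]).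
  assert (Hh4 : Rabs h < q - x) by (eapply Rlt_le_trans; [exact Hh2| apply Rmin_r]).
  assert (Hxh : p <= x + h <= q) by (revert Hh3 Hh4; unfold Rabs; destruct Rcase_abs; lra).
  unfold phic. rewrite -> (clamp_id p q (x + h)) by lra. rewrite -> (clamp_id p q x) by lra.
  apply H; auto.
- rewrite -> Rmin_left by lra. rewrite -> Rmax_right by lra.
  intros x Hx eps Heps.
  destruct (Hd x Hx 1 ltac:(lra)) as [del [Hdel H]].
  set (K := Rabs (dphi x) + 1).
  assert (HK : 0 < K) by (unfold K; pose proof (Rabs_pos (dphi x)); lra).
  exists (Rmin del (eps / K)). split.
  { apply Rmin_pos; [lra| apply Rdiv_lt_0_compat; lra]. }
  intros y [[_ Hyx] Hy]. simpl in Hy |- *. unfold R_dist in *.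
  unfold phic. rewrite -> (clamp_id p q x) by lra.
  set (y' := clampR p q y).
  assert (Hy' : Rabs (y' - x) <= Rabs (y - x)) by (apply clamp_lip; lra).
  assert (Hy1 : Rabs (y - x) < del) by (eapply Rlt_le_trans; [exact Hy| apply Rmin_l]).
  assert (Hy2 : Rabs (y - x) < eps / K) by (eapply Rlt_le_trans; [exact Hy| apply Rmin_r]).
  destruct (Req_dec y' x) as [E|E].
  { rewrite -> E. replace (phi x - phi x) with 0 by ring. rewrite Rabs_R0. lra. }
  set (h := y' - x).
  assert (Hh0 : h <> 0) by (unfold h; lra).
  assert (Hyin : p <= x + h <= q) by (unfold h; replace (x + (y' - x)) with y' by ring; apply clamp_in; lra).
  specialize (H h Hh0 ltac:(unfold h; lra) Hyin).
  replace y' with (x + h) by (unfold h; ring).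
  assert (Hq : Rabs ((phi (x + h) - phi x) / h) < K).
  { unfold K. pose proof (Rabs_triang_inv ((phi (x + h) - phi x) / h) (dphi x)). lra. }
  rewrite -> Rabs_div in Hq by exact Hh0.
  assert (Hha : 0 < Rabs h) by (apply Rabs_pos_lt; exact Hh0).
  apply (Rmult_lt_compat_r (Rabs h)) in Hq; [|exact Hha].
  unfold Rdiv in Hq. rewrite -> Rmult_assoc, Rinv_l in Hq by lra. rewrite Rmult_1_r in Hq.
  assert (K * Rabs h < eps).
  { assert (Rabs h < eps / K) by (unfold h; lra).
    apply (Rmult_lt_compat_l K) in H0; [|lra]. unfold Rdiv in H0.
    replace (K * (eps * / K)) with eps in H0 by (field; lra). exact H0. }
  lra.
- rewrite -> Rmin_left in Hc by lra. rewrite -> Rmax_right in Hc by lra.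
  exists c. split; [exact Hc|].
  unfold phic in Heq. rewrite -> ?clamp_id in Heq by lra. exact Heq.
Qed.

Section Gen.
Variable d : nat.
Local Notation I := ('I_d).

Lemma upd_eq (x : vec I) i v : upd x i v i = v.
Proof. unfold upd. rewrite eqxx. reflexivity. Qed.

Lemma upd_neq (x : vec I) i j v : j != i -> upd x i v j = x j.
Proof. intros H. unfold upd. rewrite (negbTE H). reflexivity. Qed.

Lemma upd_upd (x : vec I) i v w : upd (upd x i v) i w = upd x i w.
Proof. apply functional_extensionality. intros j. unfold upd. destruct (j == i); reflexivity. Qed.

Lemma upd_same (x : vec I) i : upd x i (x i) = x.
Proof. apply functional_extensionality. intros j. unfold upd. destruct (j == i) eqn:E; [|reflexivity].
  move/eqP: E => ->. reflexivity. Qed.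

Lemma cube_upd (x : vec I) i v : in_cube x -> 0 <= v <= 1 -> in_cube (upd x i v).
Proof. intros Hx Hv j. unfold upd. destruct (j == i); auto. Qed.

Variables (Dd : I -> R) (H : vec I -> R) (h : vec I -> vec I).
Hypothesis HD : forall i, 0 < Dd i.
Hypothesis Hpart : forall z, in_cube z -> forall i, has_partial H z i (h z i * Dd i).
Hypothesis Hmono : forall z w, in_cube z -> in_cube w -> vle z w -> vle (h z) (h w).

Lemma step (a b z : vec I) i : in_cube a -> in_cube b -> vle a z -> vle z b -> z i = a i ->
  h a i * Dd i * (b i - a i) <= H (upd z i (b i)) - H z <= h b i * Dd i * (b i - a i).
Proof.
intros Ha Hb Haz Hzb Hzi.
assert (Hab : a i <= b i) by (specialize (Haz i); specialize (Hzb i); lra).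
assert (Hz : in_cube z) by (intros j; specialize (Ha j); specialize (Hb j); specialize (Haz j); specialize (Hzb j); lra).
destruct (mvt1 (fun t => H (upd z i t)) (fun t => h (upd z i t) i * Dd i) (a i) (b i) Hab) as [c [Hc Heq]].
- intros t Ht eps Heps.
  assert (Hcu : in_cube (upd z i t)) by (apply cube_upd; auto; specialize (Ha i); specialize (Hb i); lra).
  destruct (Hpart (upd z i t) Hcu i eps Heps) as [del [Hdel Hp]].
  exists del. split; [exact Hdel|]. intros h' Hh0 Hh Hin.
  specialize (Hp h' Hh0 Hh). rewrite upd_eq upd_upd in Hp. apply Hp.
  apply cube_upd; auto. specialize (Ha i); specialize (Hb i); lra.
- rewrite -Hzi upd_same in Heq.
  assert (Hcu : in_cube (upd z i c)) by (apply cube_upd; auto; specialize (Ha i); specialize (Hb i); lra).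
  assert (L1 : vle a (upd z i c)).
  { intros j. unfold upd. destruct (j == i) eqn:E; [|auto]. move/eqP: E => ->. lra. }
  assert (L2 : vle (upd z i c) b).
  { intros j. unfold upd. destruct (j == i) eqn:E; [|auto]. move/eqP: E => ->. lra. }
  pose proof (Hmono _ _ Ha Hcu L1 i) as M1.
  pose proof (Hmono _ _ Hcu Hb L2 i) as M2.
  rewrite Heq. rewrite Hzi.
  assert (0 <= Dd i * (b i - a i)) by (apply Rmult_le_pos; [apply Rlt_le, HD| lra]).
  split; rewrite !Rmult_assoc; apply Rmult_le_compat_r; auto.
Qed.

Fixpoint zz (a b : vec I) (s : seq I) : vec I :=
  match s with nil => a | i :: s' => upd (zz a b s') i (b i) end.

Lemma zz_val a b s j : zz a b s j = if j \in s then b j else a j.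
Proof.
induction s as [|i s IH]; simpl. reflexivity.
rewrite in_cons. unfold upd. destruct (j == i) eqn:E; simpl.
- move/eqP: E => ->. rewrite eqxx. reflexivity.
- rewrite E. exact IH.
Qed.

Definition lsum (s : seq I) (u : I -> R) := foldr Rplus 0 (map u s).

Lemma chain (a b : vec I) (s : seq I) : in_cube a -> in_cube b -> vle a b -> uniq s ->
  lsum s (fun i => h a i * Dd i * (b i - a i)) <= H (zz a b s) - H a <=
  lsum s (fun i => h b i * Dd i * (b i - a i)).
Proof.
intros Ha Hb Hab. induction s as [|i s IH]; simpl; intros Hu.
- unfold lsum; simpl. lra.
- move/andP: Hu => [Hi Hu]. specialize (IH Hu).
  assert (L1 : vle a (zz a b s)).
  { intros j. rewrite zz_val. destruct (j \in s); [apply Hab| lra]. }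
  assert (L2 : vle (zz a b s) b).
  { intros j. rewrite zz_val. destruct (j \in s); [lra| apply Hab]. }
  assert (Ez : zz a b s i = a i) by (rewrite zz_val (negbTE Hi); reflexivity).
  pose proof (step a b (zz a b s) i Ha Hb L1 L2 Ez) as St.
  unfold lsum in *; simpl. lra.
Qed.

Lemma bounds (a b : vec I) : in_cube a -> in_cube b -> vle a b ->
  sumI (fun i => h a i * Dd i * (b i - a i)) <= H b - H a <=
  sumI (fun i => h b i * Dd i * (b i - a i)).
Proof.
intros Ha Hb Hab.
assert (E : zz a b (enum I) = b).
{ apply functional_extensionality. intros j. rewrite zz_val mem_enum. reflexivity. }
pose proof (chain a b (enum I) Ha Hb Hab (enum_uniq I)) as C. rewrite E in C. exact C.
Qed.

End Gen.

Lemma sumI_ext (I : finType) (u v : I -> R) : (forall i, u i = v i) -> sumI u = sumI v.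
Proof. intros E. unfold sumI. induction (enum I) as [|x s IH]; simpl; [reflexivity|]. rewrite E IH. reflexivity. Qed.

Lemma sumI_plus (I : finType) (u v : I -> R) : sumI (fun i => u i + v i) = sumI u + sumI v.
Proof. unfold sumI. induction (enum I) as [|x s IH]; simpl; [ring|]. rewrite IH. ring. Qed.

Lemma sumI_opp (I : finType) (u : I -> R) : sumI (fun i => - u i) = - sumI u.
Proof. unfold sumI. induction (enum I) as [|x s IH]; simpl; [ring|]. rewrite IH. ring. Qed.

Lemma sumI_zero (I : finType) : sumI (fun _ : I => 0) = 0.
Proof. unfold sumI. induction (enum I) as [|x s IH]; simpl; [reflexivity|]. rewrite IH. ring. Qed.

Theorem lemma2 (d : nat) (Dd : 'I_d -> R)
    (f : vec 'I_d -> R -> vec 'I_d)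
    (g : vec 'I_d -> vec 'I_d)
    (F : vec 'I_d -> R -> R) (G : vec 'I_d -> R) :
  vector_admissible Dd f g F G ->
  forall (x : vec 'I_d) (e : R), in_cube x -> in_E e ->
  (vle x (f (g x) e) \/ vle (f (g x) e) x) ->
  potential Dd g F G x e >= potential Dd g F G (f (g x) e) e.
Proof.
intros [HD [Hf [Hg [HF' [HG' [_ [_ [_ [_ [Hfm [Hgm _]]]]]]]]]]] x e Hx He Hor.
set (y := f (g x) e).
assert (Hgx : in_cube (g x)) by (apply Hg; exact Hx).
assert (Hy : in_cube y) by (apply Hf; auto).
assert (Hgy : in_cube (g y)) by (apply Hg; exact Hy).
pose proof (@bounds d Dd G g HD HG' Hgm) as BG.
pose proof (@bounds d Dd (fun z => F z e) (fun z => f z e) HD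
   (fun z hz => HF' z e hz He) (fun z w hz hw hzw => Hfm z w e hz hw He hzw)) as BF.
simpl in BF.
assert (Z : sumI (fun i => g x i * Dd i * x i + - (g y i * Dd i * y i)
     + g x i * Dd i * (y i - x i) + y i * Dd i * (g y i - g x i)) = 0).
{ rewrite (@sumI_ext _ _ (fun _ => 0)); [apply sumI_zero| intros; ring]. }
rewrite !sumI_plus sumI_opp in Z.
unfold potential. apply Rle_ge.
set S1 := sumI (fun i => g x i * Dd i * x i).
set S2 := sumI (fun i => g y i * Dd i * y i).
set A := sumI (fun i => g x i * Dd i * (y i - x i)).
set B := sumI (fun i => y i * Dd i * (g y i - g x i)).
change (S1 + - S2 + A + B = 0) in Z.
destruct Hor as [Hxy|Hyx].
- pose proof (BG x y Hx Hy Hxy) as [B1 _].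
  pose proof (BF (g x) (g y) Hgx Hgy (Hgm x y Hx Hy Hxy)) as [B2 _].
  change (A <= G y - G x) in B1. change (B <= F (g y) e - F (g x) e) in B2.
  lra.
- pose proof (BG y x Hy Hx Hyx) as [_ B1].
  pose proof (BF (g y) (g x) Hgy Hgx (Hgm y x Hy Hx Hyx)) as [_ B2].
  assert (E1 : sumI (fun i => g x i * Dd i * (x i - y i)) = - A).
  { unfold A. rewrite -sumI_opp. apply sumI_ext. intros; ring. }
  assert (E2 : sumI (fun i => y i * Dd i * (g x i - g y i)) = - B).
  { unfold B. rewrite -sumI_opp. apply sumI_ext. intros; ring. }
  change (G x - G y <= sumI (fun i => g x i * Dd i * (x i - y i))) in B1. rewrite E1 in B1.
  change (F (g x) e - F (g y) e <= sumI (fun i => y i * Dd i * (g x i - g y i))) in B2. rewrite E2 in B2.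
  lra.
Qed.
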